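(* Let $v>0$, $N\ge2$, and consider the Becker–Döring coagulation process $CP(N)$ with rates $\psi(1,1)=2v$, $\psi(i,1)=\psi(1,i)=iv$ for $i>1$, and $\psi(i,j)=0$ if $\min\{i,j\}>1$, started from $(N,0,\dots,0)$. Then its distribution is Gibbsian, $\mathbb P(X_N^{(\rho)}(t)=\eta)=N!\prod_{k=1}^N a_{k,N}(t)^{n_k}/n_k!$, with $$a_{k,N}(t)=\sum_{i=0}^k m_{i,k}\,e^{-i(N-1)vt},\qquad k=1,\dots,N,\ t\ge0,$$ where $m_{k-1,k}=0$ for $k\ge1$, $m_{k,k}=\dfrac{(-1)^{k-1}}{k(N-1)^{k-1}}$ for $k\ge1$, and $m_{i,k}=\dfrac{(-1)^i(k-1)!}{i!\,(N-1)^{k-1}(k-i)(k-i-2)!}$ for $0\le i\le k-2$. Equivalently the coefficients satisfy $m_{0,1}=0$, $m_{1,1}=1$, $m_{i,k}=-\frac{(k-1)m_{i-1,k-1}}{i(N-1)}$ for $1\le i\le k$, $k\ge2$, and $m_{0,k}=-\sum_{i=1}^k m_{i,k}$.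
   Context: $CP(N)$ is the continuous-time Markov chain on partitions $\eta=(n_1,\dots,n_N)$ of $N$ ($n_k$ = number of clusters of size $k$, $\sum kn_k=N$) in which any two distinct clusters of sizes $i,j$ merge into one of size $i+j$ at rate $\psi(i,j)$; the transition $\eta\to\eta^{(i,j)}$ has rate $n_in_j\psi(i,j)$ for $i\ne j$ and $\frac{n_i(n_i-1)}2\psi(i,i)$ for $i=j$. These rates are of the form $\psi(i,j)=if(j)+jf(i)$ with $f(1)=v$, $f(i)=0$ for $i>1$. *)

(* Defs.v *)
From Stdlib Require Import Reals Arith Bool.
Open Scope R_scope.

Fixpoint sumR (n : nat) (f : nat -> R) : R :=
  match n with O => 0 | S m => sumR m f + f m end.
Fixpoint prodR (n : nat) (f : nat -> R) : R :=
  match n with O => 1 | S m => prodR m f * f m end.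
Fixpoint sumN (n : nat) (f : nat -> nat) : nat :=
  match n with O => O | S m => (sumN m f + f m)%nat end.

(* A configuration eta : nat -> nat, eta k = n_k = number of clusters of size k. *)
Definition is_state (N : nat) (eta : nat -> nat) : Prop :=
  (forall k, (k = 0%nat \/ (N < k)%nat) -> eta k = 0%nat) /\
  sumN N (fun k => (S k * eta (S k))%nat) = N.

Definition init_state (N : nat) : nat -> nat :=
  fun k => if Nat.eqb k 1 then N else 0%nat.

Definition fBD (v : R) (k : nat) : R := if Nat.eqb k 1 then v else 0.
Definition psi (v : R) (i j : nat) : R := INR i * fBD v j + INR j * fBD v i.

Definition rate (v : R) (eta : nat -> nat) (i j : nat) : R :=
  if Nat.eqb i j then INR (eta i) * (INR (eta i) - 1) / 2 * psi v i i
  else INR (eta i) * INR (eta j) * psi v i j.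

Definition add1 (eta : nat -> nat) (k : nat) : nat -> nat :=
  fun m => if Nat.eqb m k then S (eta m) else eta m.
Definition sub1 (eta : nat -> nat) (k : nat) : nat -> nat :=
  fun m => if Nat.eqb m k then Nat.pred (eta m) else eta m.

(* the configuration xi with xi^(i,j) = eta (valid when eta (i+j) >= 1) *)
Definition premerge (eta : nat -> nat) (i j : nat) : nat -> nat :=
  add1 (add1 (sub1 eta (i + j)%nat) i) j.

(* total jump rate out of eta: sum over unordered pairs 1 <= i <= j <= N *)
Definition out_rate (N : nat) (v : R) (eta : nat -> nat) : R :=
  sumR N (fun i' => sumR N (fun j' =>
    if Nat.leb i' j' then rate v eta (S i') (S j') else 0)).

Definition in_flow (N : nat) (v : R) (p : (nat -> nat) -> R) (eta : nat -> nat) : R :=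
  sumR N (fun i' => sumR N (fun j' =>
    let i := S i' in let j := S j' in
    if (Nat.leb i j && Nat.leb (i + j)%nat N && Nat.leb 1 (eta (i + j)%nat))%bool
    then p (premerge eta i j) * rate v (premerge eta i j) i j else 0)).

Definition mcoef (N i k : nat) : R :=
  if Nat.eqb i k then (-1) ^ (k - 1) / (INR k * INR (N - 1) ^ (k - 1))
  else if Nat.eqb (S i) k then 0
  else (-1) ^ i * INR (fact (k - 1)) /
       (INR (fact i) * INR (N - 1) ^ (k - 1) * INR (k - i) * INR (fact (k - i - 2))).

Definition acoef (N : nat) (v : R) (k : nat) (t : R) : R :=
  sumR (S k) (fun i => mcoef N i k * exp (- INR i * INR (N - 1) * v * t)).

Definition gibbs (N : nat) (v : R) (t : R) (eta : nat -> nat) : R :=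
  INR (fact N) * prodR N (fun k' =>
    acoef N v (S k') t ^ (eta (S k')) / INR (fact (eta (S k')))).

(* Main.v *)
Require Import Defs.
From Stdlib Require Import Reals Arith Lia Lra Classical FunctionalExtensionality.
From Coquelicot Require Import Coquelicot.
Open Scope R_scope.

Lemma sumR_ext n f g : (forall k, (k < n)%nat -> f k = g k) -> sumR n f = sumR n g.
Proof. induction n; simpl; intros H; auto. rewrite IHn by (intros; apply H; lia). rewrite H by lia. auto. Qed.
Lemma sumR_shift n f : sumR (S n) f = f O + sumR n (fun i => f (S i)).
Proof. induction n; simpl in *. ring. rewrite IHn. ring. Qed.
Lemma sumR_zero n f : (forall k, (k < n)%nat -> f k = 0) -> sumR n f = 0.
Proof. induction n; simpl; intros H; auto. rewrite IHn by (intros; apply H; lia). rewrite H by lia. ring. Qed.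
Lemma sumR_scal n c f : sumR n (fun i => c * f i) = c * sumR n f.
Proof. induction n; simpl. ring. rewrite IHn. ring. Qed.
Lemma sumN_ext n f g : (forall k, (k < n)%nat -> f k = g k) -> sumN n f = sumN n g.
Proof. induction n; simpl; intros H; auto. rewrite IHn by (intros; apply H; lia). rewrite H by lia. auto. Qed.
Lemma sumN_shift n f : sumN (S n) f = (f O + sumN n (fun i => f (S i)))%nat.
Proof. induction n; simpl in *. lia. rewrite IHn. lia. Qed.
Lemma sumN_zero n f : (forall k, (k < n)%nat -> f k = O) -> sumN n f = O.
Proof. induction n; simpl; intros H; auto. rewrite IHn by (intros; apply H; lia). rewrite H by lia. auto. Qed.
Lemma sumN_le n f g : (forall k, (f k <= g k)%nat) -> (sumN n f <= sumN n g)%nat.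
Proof. induction n; simpl; intros H; auto. specialize (IHn H). specialize (H n). lia. Qed.
Lemma INR_sumN n f : INR (sumN n f) = sumR n (fun i => INR (f i)).
Proof. induction n; simpl. auto. rewrite plus_INR, IHn. auto. Qed.

Lemma D_ext f g x l : (forall y, f y = g y) -> derivable_pt_lim f x l -> derivable_pt_lim g x l.
Proof. intros H. replace g with f; auto. apply functional_extensionality; auto. Qed.

Lemma D_poly n c y : derivable_pt_lim (fun y => sumR n (fun i => c i * y ^ i)) y
  (sumR n (fun i => c i * (INR i * y ^ pred i))).
Proof.
  induction n; simpl.
  - apply (D_ext (fct_cte 0)). reflexivity. apply derivable_pt_lim_const.
  - apply (derivable_pt_lim_plus _ (fun y => c n * y ^ n)); auto.
    apply (derivable_pt_lim_scal (fun y => y ^ n)). apply derivable_pt_lim_pow.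
Qed.

Lemma INR_S_nz n : INR (S n) <> 0.
Proof. apply not_0_INR. lia. Qed.

Section Coef.
Variable N : nat.
Hypothesis hN : (2 <= N)%nat.
Local Notation M := (INR (N - 1)).
Lemma M_pos : 0 < M.
Proof. apply lt_0_INR. lia. Qed.
Lemma M_nz : M <> 0.
Proof. generalize M_pos; lra. Qed.

Definition A k y := sumR (S k) (fun i => mcoef N i k * y ^ i).
Definition A' k y := sumR (S k) (fun i => mcoef N i k * (INR i * y ^ pred i)).
Lemma D_A k y : derivable_pt_lim (A k) y (A' k y).
Proof. apply D_poly. Qed.


Lemma mcoef_rec i k : (1 <= i)%nat -> (i <= S k)%nat -> (1 <= k)%nat ->
  INR i * mcoef N i (S k) = - (INR k / M) * mcoef N (pred i) k.
Proof.
  intros h1 h2 h3. generalize M_nz; intro HM.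
  destruct (Nat.eq_dec i (S k)) as [->|ne1].
  - unfold mcoef. rewrite !Nat.eqb_refl. simpl pred.
    replace (S k - 1)%nat with k by lia. destruct k as [|m]; [lia|].
    replace (S m - 1)%nat with m by lia. simpl pow.
    field. repeat split; auto using pow_nonzero, INR_S_nz.
  - destruct (Nat.eq_dec i k) as [->|ne2].
    + unfold mcoef. destruct k as [|m]; [lia|].
      rewrite (proj2 (Nat.eqb_neq (S m) (S (S m)))) by lia. rewrite Nat.eqb_refl.
      simpl pred. rewrite (proj2 (Nat.eqb_neq m (S m))) by lia. rewrite Nat.eqb_refl. ring.
    + destruct i as [|i0]; [lia|]. 
      assert (exists d, k = (S i0 + 1 + d)%nat) as [d ->] by (exists (k - S i0 - 1)%nat; lia).
      unfold mcoef. simpl pred.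
      rewrite (proj2 (Nat.eqb_neq (S i0) (S (S i0 + 1 + d)))) by lia.
      rewrite (proj2 (Nat.eqb_neq (S (S i0)) (S (S i0 + 1 + d)))) by lia.
      rewrite (proj2 (Nat.eqb_neq i0 (S i0 + 1 + d))) by lia.
      rewrite (proj2 (Nat.eqb_neq (S i0) (S i0 + 1 + d))) by lia.
      replace (S (S i0 + 1 + d) - 1)%nat with (S (S i0 + d)) by lia.
      replace (S i0 + 1 + d - 1)%nat with (S i0 + d)%nat by lia.
      replace (S (S i0 + 1 + d) - S i0)%nat with (S (S d)) by lia.
      replace (S i0 + 1 + d - i0)%nat with (S (S d)) by lia.
      replace (S (S d) - 2)%nat with d by lia.
      rewrite fact_simpl. rewrite (fact_simpl i0). rewrite !mult_INR.
      replace (S i0 + 1 + d)%nat with (S (S i0 + d)) by lia.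
      simpl pow. field.
      repeat split; auto using INR_fact_neq_0, INR_S_nz, pow_nonzero.
Qed.

Lemma A'_rec k y : (1 <= k)%nat -> A' (S k) y = - (INR k / M) * A k y.
Proof.
  intros hk. unfold A', A. rewrite sumR_shift. simpl INR at 1. rewrite Rmult_0_l, Rmult_0_r, Rplus_0_l.
  rewrite <- sumR_scal. apply sumR_ext. intros i hi.
  replace (mcoef N (S i) (S k) * (INR (S i) * y ^ pred (S i))) with
    ((INR (S i) * mcoef N (S i) (S k)) * y ^ i) by (simpl pred; ring).
  rewrite mcoef_rec by lia. simpl pred. ring.
Qed.

Definition B k y := (1 - y) ^ (k - 1) * (INR k - 1 + y) / (INR k * M ^ (k - 1)).

Lemma D_B m y : derivable_pt_lim (B (S (S m))) y (- (INR (S m) / M) * B (S m) y).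
Proof.
  generalize M_nz; intro HM.
  apply is_derive_Reals. unfold B. replace (S (S m) - 1)%nat with (S m) by lia.
  replace (S m - 1)%nat with m by lia.
  auto_derive. auto.
  change (match m with 0%nat => 1 | S _ => INR m + 1 end) with (INR (S m)).
  replace (1 + - y) with (1 - y) by ring.
  assert (INR (S m) + 1 <> 0) by (rewrite <- S_INR; apply INR_S_nz).
  field. repeat split; auto using pow_nonzero, INR_S_nz.
Qed.

Lemma A0 k : A k 0 = mcoef N O k.
Proof. unfold A. rewrite sumR_shift. rewrite sumR_zero. simpl. ring. intros; simpl; ring. Qed.

Lemma AB0 m : A (S (S m)) 0 = B (S (S m)) 0.
Proof.
  generalize M_nz; intro HM.
  rewrite A0. unfold mcoef, B. simpl Nat.eqb. cbv iota.
  replace (S (S m) - 1)%nat with (S m) by lia. replace (S (S m) - 0)%nat with (S (S m)) by lia.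
  replace (S (S m) - 2)%nat with m by lia. rewrite fact_simpl. rewrite mult_INR.
  replace ((-1)^0) with 1 by (simpl; ring). replace (1 - 0) with 1 by ring. rewrite pow1.
  simpl (INR (fact 0)). rewrite (S_INR (S m)).
  assert (INR (S m) + 1 <> 0) by (rewrite <- S_INR; apply INR_S_nz).
  field. repeat split; auto using pow_nonzero, INR_S_nz, INR_fact_neq_0.
Qed.

Lemma A_B k y : (1 <= k)%nat -> 0 <= y <= 1 -> A k y = B k y.
Proof.
  generalize M_nz; intro HM.
  intros hk. revert y. induction k as [|k IH]; [lia|]. intros y hy.
  destruct k as [|m].
  - unfold A, B, mcoef. simpl. field. auto.
  - destruct (Req_dec y 0) as [->|ny].
    + apply AB0.
    + assert (hy0 : 0 < y) by lra.
      destruct (MVT_cor2 (fun y => A (S (S m)) y - B (S (S m)) y)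
         (fun y => A' (S (S m)) y - (- (INR (S m) / M) * B (S m) y)) 0 y hy0) as [c [Hc1 Hc2]].
      { intros c hc. apply derivable_pt_lim_minus. apply D_A. apply D_B. }
      rewrite A'_rec in Hc1 by lia. rewrite (IH ltac:(lia) c) in Hc1 by lra.
      assert (A (S (S m)) 0 - B (S (S m)) 0 = 0).
      { rewrite AB0. ring. }
      lra.
Qed.

Lemma A1_zero k : (2 <= k)%nat -> A k 1 = 0.
Proof.
  intros hk. rewrite A_B by (lia || lra). unfold B. destruct k as [|[|k]]; try lia.
  replace (S (S k) - 1)%nat with (S k) by lia. simpl. lra.
Qed.

Lemma A1 y : A 1 y = y.
Proof. unfold A, mcoef. simpl. field. Qed.

End Coef.

Lemma exp_INR_mul i a : exp (INR i * a) = exp a ^ i.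
Proof. induction i. simpl. rewrite Rmult_0_l. apply exp_0.
  rewrite S_INR. replace ((INR i + 1) * a) with (INR i * a + a) by ring. rewrite exp_plus, IHi. simpl. ring. Qed.

Lemma prodR_ext n f g : (forall k, (k < n)%nat -> f k = g k) -> prodR n f = prodR n g.
Proof. induction n; simpl; intros H; auto. rewrite IHn by (intros; apply H; lia). rewrite H by lia. auto. Qed.

Lemma prodR_upd_scale n k c X F : (k < n)%nat ->
  prodR n (fun j => if j =? k then c * X else F j) = c * prodR n (fun j => if j =? k then X else F j).
Proof.
  induction n; intros hk; [lia|]. simpl.
  destruct (Nat.eq_dec k n) as [->|ne].
  - rewrite Nat.eqb_refl.
    assert (E1: prodR n (fun j => if j =? n then c*X else F j) = prodR n F) by
      (apply prodR_ext; intros j hj; rewrite (proj2 (Nat.eqb_neq j n)) by lia; auto).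
    assert (E2: prodR n (fun j => if j =? n then X else F j) = prodR n F) by
      (apply prodR_ext; intros j hj; rewrite (proj2 (Nat.eqb_neq j n)) by lia; auto).
    rewrite E1, E2. ring.
  - rewrite IHn by lia. rewrite (proj2 (Nat.eqb_neq n k)) by lia. ring.
Qed.

Lemma D_prod n (F : nat -> R -> R) (d : nat -> R) t :
  (forall j, (j < n)%nat -> derivable_pt_lim (F j) t (d j)) ->
  derivable_pt_lim (fun s => prodR n (fun j => F j s)) t
    (sumR n (fun k => prodR n (fun j => if j =? k then d j else F j t))).
Proof.
  induction n; intros HF; simpl.
  - apply (D_ext (fct_cte 1)). reflexivity. apply derivable_pt_lim_const.
  - apply (D_ext (mult_fct (fun s => prodR n (fun j => F j s)) (F n))). reflexivity.
    replace (sumR n (fun k => prodR n (fun j => if j =? k then d j else F j t) *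
      (if n =? k then d n else F n t)) +
      prodR n (fun j => if j =? n then d j else F j t) * (if n =? n then d n else F n t))
    with (sumR n (fun k => prodR n (fun j => if j =? k then d j else F j t)) * F n t +
          prodR n (fun j => F j t) * d n).
    apply derivable_pt_lim_mult. apply IHn; intros; apply HF; lia. apply HF; lia.
    rewrite Nat.eqb_refl.
    assert (E1: prodR n (fun j => if j =? n then d j else F j t) = prodR n (fun j => F j t)) by
      (apply prodR_ext; intros j hj; rewrite (proj2 (Nat.eqb_neq j n)) by lia; auto).
    rewrite E1.
    rewrite (Rmult_comm (sumR _ _)), <- sumR_scal. f_equal. apply sumR_ext. intros k hk.
    rewrite (proj2 (Nat.eqb_neq n k)) by lia. ring.
Qed.

Lemma add1_sub1 e k : (1 <= e k)%nat -> add1 (sub1 e k) k = e.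
Proof.
  intros h. apply functional_extensionality. intros m. unfold add1, sub1.
  destruct (Nat.eqb_spec m k) as [->|ne]. lia. auto.
Qed.

Section Gibbs.
Variable N : nat.
Variable v : R.
Hypothesis hN : (2 <= N)%nat.
Local Notation M := (INR (N - 1)).

Definition xt t := exp (-(M * v * t)).

Lemma acoef_A k t : acoef N v k t = A N k (xt t).
Proof.
  unfold acoef, A, xt. apply sumR_ext. intros i hi. f_equal.
  rewrite <- exp_INR_mul. f_equal. ring.
Qed.

Lemma D_xt t : derivable_pt_lim xt t (-(M*v) * xt t).
Proof.
  rewrite Rmult_comm.
  apply (D_ext (comp exp (mult_real_fct (-(M*v)) id))).
  { intros y. unfold comp, mult_real_fct, id, xt. f_equal. ring. }
  replace (xt t * - (M * v)) with (exp (mult_real_fct (- (M * v)) id t) * (- (M * v) * 1)).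
  apply derivable_pt_lim_comp. apply derivable_pt_lim_scal. apply derivable_pt_lim_id.
  apply derivable_pt_lim_exp.
  unfold mult_real_fct, id, xt. replace (- (M * v) * t) with (-(M*v*t)) by ring. ring.
Qed.

Definition da k t := if k =? 1 then -(M*v) * acoef N v 1 t
  else INR (k-1) * v * acoef N v 1 t * acoef N v (k-1) t.

Lemma a1_xt t : acoef N v 1 t = xt t.
Proof. rewrite acoef_A. apply A1. Qed.

Lemma D_acoef k t : (1 <= k)%nat -> derivable_pt_lim (fun s => acoef N v k s) t (da k t).
Proof.
  intros hk. apply (D_ext (comp (A N k) xt)).
  { intros y. unfold comp. rewrite acoef_A. auto. }
  destruct k as [|[|k1]]; [lia| |].
  - replace (da 1 t) with (A' N 1 (xt t) * (-(M*v) * xt t)).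
    apply derivable_pt_lim_comp. apply D_xt. apply D_A.
    unfold da. simpl Nat.eqb. cbv iota. rewrite a1_xt. unfold A', mcoef. simpl. field.
  - replace (da (S (S k1)) t) with (A' N (S (S k1)) (xt t) * (-(M*v) * xt t)).
    apply derivable_pt_lim_comp. apply D_xt. apply D_A.
    rewrite A'_rec by lia. unfold da. simpl Nat.eqb. cbv iota.
    replace (S (S k1) - 1)%nat with (S k1) by lia. rewrite a1_xt, acoef_A.
    field. apply M_nz; auto.
Qed.

Lemma xt0 : xt 0 = 1.
Proof. unfold xt. rewrite Rmult_0_r, Ropp_0. apply exp_0. Qed.

Lemma acoef1_0 : acoef N v 1 0 = 1.
Proof. rewrite a1_xt. apply xt0. Qed.

Lemma acoefk_0 k : (2 <= k)%nat -> acoef N v k 0 = 0.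
Proof. intros hk. rewrite acoef_A, xt0. apply A1_zero; auto. Qed.

Definition Gp t (e : nat -> nat) :=
  prodR N (fun k' => acoef N v (S k') t ^ e (S k') / INR (fact (e (S k')))).

Lemma Gp_add1 t e k : (1 <= k <= N)%nat -> Gp t (add1 e k) * INR (S (e k)) = acoef N v k t * Gp t e.
Proof.
  intros hk. destruct k as [|k']; [lia|]. unfold Gp.
  set (a := acoef N v (S k') t). set (n := e (S k')).
  rewrite (prodR_ext N _ (fun j => if j =? k' then (a / INR (S n)) * (a ^ n / INR (fact n))
     else acoef N v (S j) t ^ e (S j) / INR (fact (e (S j))))).
  rewrite prodR_upd_scale by lia.
  rewrite (prodR_ext N (fun j => if j =? k' then (a ^ n / INR (fact n))
     else acoef N v (S j) t ^ e (S j) / INR (fact (e (S j)))) 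
     (fun k'0 => acoef N v (S k'0) t ^ e (S k'0) / INR (fact (e (S k'0))))).
  field. apply INR_S_nz.
  { intros j hj. destruct (Nat.eq_dec j k') as [->|ne]. rewrite Nat.eqb_refl. auto.
    rewrite (proj2 (Nat.eqb_neq j k')) by lia. auto. }
  { intros j hj. unfold add1. destruct (Nat.eq_dec j k') as [->|ne].
    rewrite !Nat.eqb_refl. fold n. fold a. rewrite fact_simpl, mult_INR. simpl pow.
    field. split; [apply INR_fact_neq_0|apply INR_S_nz].
    rewrite (proj2 (Nat.eqb_neq j k')) by lia. rewrite (proj2 (Nat.eqb_neq (S j) (S k'))) by lia. auto. }
Qed.



Lemma Gp_sub1 t e k : (1 <= k <= N)%nat -> (1 <= e k)%nat ->
  Gp t e * INR (e k) = acoef N v k t * Gp t (sub1 e k).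
Proof.
  intros hk he. rewrite <- Gp_add1 by auto. rewrite add1_sub1 by auto. f_equal. f_equal.
  unfold sub1. rewrite Nat.eqb_refl. lia.
Qed.

Lemma D_Gp t e : derivable_pt_lim (fun s => Gp s e) t
  (sumR N (fun k' => if e (S k') =? 0 then 0 else da (S k') t * Gp t (sub1 e (S k')))).
Proof.
  unfold Gp.
  set (F := fun j s => acoef N v (S j) s ^ e (S j) / INR (fact (e (S j)))).
  set (d := fun j => INR (e (S j)) * acoef N v (S j) t ^ pred (e (S j)) * da (S j) t / INR (fact (e (S j)))).
  apply (D_ext (fun s => prodR N (fun j => F j s))). reflexivity.
  replace (sumR N _) with (sumR N (fun k => prodR N (fun j => if j =? k then d j else F j t))).
  apply D_prod. intros j hj.
  { apply (D_ext (mult_real_fct (/ INR (fact (e (S j)))) (comp (fun y => y ^ e (S j)) (fun s => acoef N v (S j) s)))).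
    intros y. unfold mult_real_fct, comp, F. unfold Rdiv. ring.
    unfold d. unfold Rdiv. rewrite (Rmult_comm _ (/ _)).
    apply derivable_pt_lim_scal.
    apply derivable_pt_lim_comp. apply D_acoef. lia. apply derivable_pt_lim_pow. }
  apply sumR_ext. intros k hk.
  rewrite (prodR_ext N _ (fun j => if j =? k then d k else F j t)).
  2:{ intros j hj. destruct (Nat.eqb_spec j k) as [->|]; auto. }
  destruct (e (S k)) eqn:En.
  - simpl Nat.eqb. cbv iota. replace (d k) with (0 * 1).
    rewrite prodR_upd_scale by lia. ring. unfold d. rewrite En. simpl. field.
  - simpl Nat.eqb. cbv iota.
    replace (d k) with (da (S k) t * (acoef N v (S k) t ^ n / INR (fact n))).
    rewrite prodR_upd_scale by lia. f_equal. apply prodR_ext. intros j hj.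
    unfold F, sub1. destruct (Nat.eqb_spec j k) as [->|ne].
    rewrite Nat.eqb_refl, En. auto.
    rewrite (proj2 (Nat.eqb_neq (S j) (S k))) by lia. auto.
    unfold d. rewrite En. rewrite fact_simpl, mult_INR. simpl pred. field.
    split; [apply INR_fact_neq_0|apply INR_S_nz].
Qed.

End Gibbs.

Lemma sumR_shift' n f : (1 <= n)%nat -> sumR n f = f O + sumR (n - 1) (fun i => f (S i)).
Proof. intros h. destruct n; [lia|]. rewrite sumR_shift. replace (S n - 1)%nat with n by lia. auto. Qed.
Lemma sumN_shift' n f : (1 <= n)%nat -> sumN n f = (f O + sumN (n - 1) (fun i => f (S i)))%nat.
Proof. intros h. destruct n; [lia|]. rewrite sumN_shift. replace (S n - 1)%nat with n by lia. auto. Qed.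

Lemma psi_zero v i j : (2 <= i)%nat -> (2 <= j)%nat -> psi v i j = 0.
Proof.
  intros hi hj. unfold psi, fBD. rewrite (proj2 (Nat.eqb_neq i 1)) by lia.
  rewrite (proj2 (Nat.eqb_neq j 1)) by lia. ring.
Qed.
Lemma rate_zero v e i j : (2 <= i)%nat -> (2 <= j)%nat -> rate v e i j = 0.
Proof. intros hi hj. unfold rate. rewrite !psi_zero by lia. destruct (i =? j); ring. Qed.

Section Master.
Variable N : nat.
Variable v : R.
Hypothesis hN : (2 <= N)%nat.
Local Notation M := (INR (N - 1)).

Definition Iterm e t j' := if (Nat.leb (S (S j')) N && Nat.leb 1 (e (S (S j'))))%bool then
   v * INR (S j') * acoef N v 1 t * acoef N v (S j') t * Gp N v t (sub1 e (S (S j'))) else 0.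

Lemma inflow_gibbs e t : in_flow N v (gibbs N v t) e = INR (fact N) * sumR N (Iterm e t).
Proof.
  unfold in_flow. rewrite sumR_shift' by lia.
  rewrite (sumR_zero (N - 1)). 2:{
    intros i' hi'. apply sumR_zero. intros j' hj'. cbv zeta.
    destruct (Nat.leb (S (S i')) (S j')) eqn:E; cbn [andb]; [|ring].
    apply Nat.leb_le in E.
    destruct (_ && _)%bool; [rewrite rate_zero by lia; ring|ring]. }
  rewrite Rplus_0_r. rewrite <- sumR_scal. apply sumR_ext. intros j' hj'. cbv zeta.
  change (Nat.leb 1 (S j')) with true. change (1 + S j')%nat with (S (S j')).
  unfold Iterm. cbn [andb].
  destruct (Nat.leb (S (S j')) N && Nat.leb 1 (e (S (S j'))))%bool eqn:C; [|ring].
  apply andb_prop in C. destruct C as [C1 C2]. apply Nat.leb_le in C1. apply Nat.leb_le in C2.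
  unfold gibbs. fold (Gp N v t (premerge e 1 (S j'))).
  destruct j' as [|j''].
  - unfold premerge. change (1 + 1)%nat with 2%nat. set (s := sub1 e 2).
    assert (H1 := Gp_add1 N v hN t (add1 s 1%nat) 1%nat ltac:(lia)).
    assert (H2 := Gp_add1 N v hN t s 1%nat ltac:(lia)).
    change (add1 s 1%nat 1%nat) with (S (e 1%nat)) in H1. change (s 1%nat) with (e 1%nat) in H2.
    unfold rate. rewrite Nat.eqb_refl.
    change (add1 (add1 s 1%nat) 1%nat 1%nat) with (S (S (e 1%nat))).
    unfold psi, fBD. simpl Nat.eqb. cbv iota.
    replace (INR (S (S (e 1%nat))) - 1) with (INR (S (e 1%nat))) by (rewrite (S_INR (S (e 1%nat))); ring).
    replace (INR (fact N) * Gp N v t (add1 (add1 s 1%nat) 1%nat) *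
      (INR (S (S (e 1%nat))) * INR (S (e 1%nat)) / 2 * (INR 1 * v + INR 1 * v))) with
      (INR (fact N) * v * ((Gp N v t (add1 (add1 s 1%nat) 1%nat) * INR (S (S (e 1%nat)))) * INR (S (e 1%nat)))) by (simpl; field).
    rewrite H1. rewrite (Rmult_assoc (acoef N v 1 t)), H2. simpl INR. ring.
  - unfold premerge. change (1 + S (S j''))%nat with (S (S (S j''))). set (s := sub1 e (S (S (S j'')))).
    assert (H1 := Gp_add1 N v hN t (add1 s 1%nat) (S (S j'')) ltac:(lia)).
    assert (H2 := Gp_add1 N v hN t s 1%nat ltac:(lia)).
    assert (E1 : add1 s 1 (S (S j'')) = e (S (S j''))).
    { unfold s, add1, sub1. simpl Nat.eqb. cbv iota. rewrite (proj2 (Nat.eqb_neq j'' (S j''))) by lia. auto. }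
    rewrite E1 in H1. change (s 1%nat) with (e 1%nat) in H2.
    unfold rate. change (Nat.eqb 1 (S (S j''))) with false. cbv iota.
    change (add1 (add1 s 1%nat) (S (S j'')) 1%nat) with (S (e 1%nat)).
    replace (add1 (add1 s 1%nat) (S (S j'')) (S (S j''))) with (S (e (S (S j'')))) by
      (unfold add1 at 1; rewrite Nat.eqb_refl; rewrite E1; auto).
    unfold psi, fBD. simpl Nat.eqb. cbv iota.
    replace (INR (fact N) * Gp N v t (add1 (add1 s 1%nat) (S (S j''))) *
      (INR (S (e 1%nat)) * INR (S (e (S (S j'')))) * (INR 1 * 0 + INR (S (S j'')) * v))) with
      (INR (fact N) * v * INR (S (S j'')) * ((Gp N v t (add1 (add1 s 1%nat) (S (S j''))) * INR (S (e (S (S j''))))) * INR (S (e 1%nat)))) by (simpl; ring).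
    rewrite H1. rewrite (Rmult_assoc (acoef N v (S (S j'')) t)), H2. ring.
Qed.


Lemma out_rate_state e : is_state N e -> out_rate N v e = v * INR (e 1%nat) * M.
Proof.
  intros [_ Hs]. unfold out_rate. rewrite sumR_shift' by lia.
  rewrite (sumR_zero (N - 1)). 2:{
    intros i' hi'. apply sumR_zero. intros j' hj'.
    destruct (Nat.leb (S i') j') eqn:E; [|reflexivity].
    apply Nat.leb_le in E. apply rate_zero; lia. }
  rewrite Rplus_0_r. cbv beta. rewrite sumR_shift' by lia.
  change (Nat.leb 0 0) with true. cbv iota.
  rewrite (sumR_ext (N-1) _ (fun i => INR (e 1%nat) * v * (INR (S (S i)) * INR (e (S (S i)))))).
  2:{ intros i hi. change (Nat.leb 0 (S i)) with true. cbv iota.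
      unfold rate. change (Nat.eqb 1 (S (S i))) with false. cbv iota.
      unfold psi, fBD. change (Nat.eqb (S (S i)) 1) with false. rewrite Nat.eqb_refl. cbv iota. simpl INR. ring. }
  rewrite sumR_scal.
  rewrite sumN_shift' in Hs by lia. apply (f_equal INR) in Hs. rewrite plus_INR, INR_sumN in Hs.
  rewrite (sumR_ext (N-1) _ (fun i => INR (S (S i)) * INR (e (S (S i))))) in Hs.
  2:{ intros i hi. apply mult_INR. }
  rewrite mult_INR in Hs. rewrite minus_INR by lia.
  unfold rate. rewrite Nat.eqb_refl. unfold psi, fBD. rewrite Nat.eqb_refl. change (INR 1) with 1 in *.
  set (S0 := sumR (N - 1) (fun i => INR (S (S i)) * INR (e (S (S i))))) in *.
  assert (S0 = INR N - INR (e 1%nat)) by lra. rewrite H. field.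
Qed.

Lemma D_gibbs e t : is_state N e -> derivable_pt_lim (fun s => gibbs N v s e) t
  (in_flow N v (gibbs N v t) e - gibbs N v t e * out_rate N v e).
Proof.
  intros He.
  apply (D_ext (mult_real_fct (INR (fact N)) (fun s => Gp N v s e))). reflexivity.
  rewrite inflow_gibbs, out_rate_state by auto. unfold gibbs. fold (Gp N v t e).
  replace (INR (fact N) * sumR N (Iterm e t) - INR (fact N) * Gp N v t e * (v * INR (e 1%nat) * M))
   with (INR (fact N) * sumR N (fun k' => if e (S k') =? 0 then 0 else da N v (S k') t * Gp N v t (sub1 e (S k')))).
  apply derivable_pt_lim_scal. apply D_Gp; auto.
  assert (EI : sumR N (Iterm e t) = sumR (N-1) (Iterm e t) + Iterm e t (N-1)).
  { replace N with (S (N-1)) at 1 by lia. reflexivity. }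
  assert (EI2 : Iterm e t (N-1) = 0).
  { unfold Iterm. rewrite (proj2 (Nat.leb_gt (S (S (N-1))) N)) by lia. reflexivity. }
  rewrite EI, EI2, Rplus_0_r. rewrite sumR_shift' by lia.
  rewrite (sumR_ext (N-1) _ (Iterm e t)).
  2:{ intros j' hj'. unfold Iterm. rewrite (proj2 (Nat.leb_le (S (S j')) N)) by lia. cbn [andb].
      destruct (e (S (S j'))) eqn:En. reflexivity. simpl Nat.eqb. cbv iota.
      unfold da. change (Nat.eqb (S (S j')) 1) with false. cbv iota.
      replace (S (S j') - 1)%nat with (S j') by lia. change (Nat.leb 1 (S n)) with true. cbv iota. ring. }
  destruct (e 1%nat) eqn:E1.
  - simpl Nat.eqb. cbv iota. simpl INR. ring.
  - change (Nat.eqb (S n) 0) with false. cbv iota.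
    assert (H := Gp_sub1 N v hN t e 1%nat ltac:(lia) ltac:(lia)). rewrite E1 in H.
    unfold da. rewrite Nat.eqb_refl. 
    replace (- (M * v) * acoef N v 1 t * Gp N v t (sub1 e 1)) with (- (M * v) * (acoef N v 1 t * Gp N v t (sub1 e 1))) by ring.
    rewrite <- H. ring.
Qed.

End Master.

Lemma D_expc c z : derivable_pt_lim (fun s => exp (c * s)) z (exp (c * z) * (c * 1)).
Proof.
  apply (D_ext (comp exp (mult_real_fct c id))). reflexivity.
  apply derivable_pt_lim_comp. apply derivable_pt_lim_scal. apply derivable_pt_lim_id.
  apply derivable_pt_lim_exp.
Qed.

Lemma ode_unique (q : R -> R) (c : R) :
  (forall t, 0 < t -> derivable_pt_lim q t (-c * q t)) ->
  (forall eps, 0 < eps -> exists delta, 0 < delta /\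
     forall s, 0 <= s < delta -> Rabs (q s - q 0) < eps) ->
  q 0 = 0 -> forall t, 0 <= t -> q t = 0.
Proof.
  intros HD HC H0 t ht.
  destruct (Req_dec t 0) as [->|nt]; auto.
  assert (tp : 0 < t) by lra.
  assert (Key : forall eps, 0 < eps < t -> q t * exp (c * t) = q eps * exp (c * eps)).
  { intros eps he.
    destruct (MVT_cor2 (fun s => q s * exp (c * s))
      (fun s => -c * q s * exp (c * s) + q s * (exp (c * s) * (c * 1))) eps t ltac:(lra)) as [z [Hz1 Hz2]].
    - intros z hz. apply (D_ext (mult_fct q (fun s => exp (c * s)))). reflexivity.
      apply (derivable_pt_lim_mult q (fun s => exp (c*s)) z (-c * q z) (exp (c*z) * (c*1))). apply HD. lra.
      apply D_expc.
    - replace (- c * q z * exp (c * z) + q z * (exp (c * z) * (c * 1))) with 0 in Hz1 by ring. lra. }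
  apply NNPP. intros Hq.
  set (h := q t * exp (c * t)).
  assert (hnz : h <> 0). { unfold h. intro E. apply Rmult_integral in E. destruct E as [E|E]; auto. generalize (exp_pos (c*t)). lra. }
  set (K := exp (Rabs c * t)).
  assert (Kp : 0 < K) by apply exp_pos.
  destruct (HC (Rabs h / K)) as [dl [dp Hd]].
  { apply Rdiv_lt_0_compat; auto. apply Rabs_pos_lt; auto. }
  set (ep := Rmin (dl / 2) (t / 2)).
  assert (ep1 : 0 < ep). { unfold ep. apply Rmin_glb_lt; lra. }
  assert (ep2 : ep <= t / 2) by apply Rmin_r.
  assert (ep3 : ep <= dl / 2) by apply Rmin_l.
  specialize (Hd ep ltac:(lra)). rewrite H0, Rminus_0_r in Hd.
  specialize (Key ep ltac:(lra)). fold h in Key.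
  assert (Ek : exp (c * ep) <= K).
  { assert (L: c*ep <= Rabs c * t).
    { apply Rle_trans with (Rabs c * ep). rewrite <- (Rabs_pos_eq ep) at 2 by lra.
      rewrite <- Rabs_mult. apply Rle_abs. apply Rmult_le_compat_l; [apply Rabs_pos|lra]. }
    unfold K. destruct L as [L|L]; [left; apply exp_increasing; auto | rewrite L; right; reflexivity]. }
  assert (Rabs h = Rabs (q ep) * exp (c * ep)).
  { rewrite Key, Rabs_mult, (Rabs_pos_eq (exp _)) by (left; apply exp_pos). auto. }
  assert (Rabs (q ep) * exp (c * ep) <= Rabs (q ep) * K).
  { apply Rmult_le_compat_l; auto. apply Rabs_pos. }
  assert (Rabs (q ep) * K < Rabs h / K * K).
  { apply Rmult_lt_compat_r; auto. }
  replace (Rabs h / K * K) with (Rabs h) in H2 by (field; lra).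
  lra.
Qed.

Definition Cn N e := sumN N (fun k => (1 * e (S k))%nat).

Lemma W_add1 n (w : nat -> nat) e k : (1 <= k <= n)%nat ->
  sumN n (fun k' => (w k' * add1 e k (S k'))%nat) = (sumN n (fun k' => (w k' * e (S k'))%nat) + w (k - 1))%nat.
Proof.
  induction n; intros hk; [lia|]. simpl.
  destruct (Nat.eq_dec k (S n)) as [->|ne].
  - rewrite (sumN_ext n (fun k' => (w k' * add1 e (S n) (S k'))%nat) (fun k' => (w k' * e (S k'))%nat)).
    unfold add1. rewrite Nat.eqb_refl. replace (S n - 1)%nat with n by lia. rewrite Nat.mul_succ_r. lia.
    intros j hj. unfold add1. rewrite (proj2 (Nat.eqb_neq (S j) (S n))) by lia. auto.
  - rewrite IHn by lia. unfold add1 at 1. rewrite (proj2 (Nat.eqb_neq (S n) k)) by lia. lia.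
Qed.

Lemma W_sub1 n (w : nat -> nat) e k : (1 <= k <= n)%nat -> (1 <= e k)%nat ->
  (sumN n (fun k' => (w k' * sub1 e k (S k'))%nat) + w (k - 1))%nat = sumN n (fun k' => (w k' * e (S k'))%nat).
Proof.
  intros hk he. rewrite <- W_add1 by auto. rewrite add1_sub1 by auto. auto.
Qed.

Lemma Cn_le N e : is_state N e -> (Cn N e <= N)%nat.
Proof.
  intros [_ Hs]. unfold Cn. rewrite <- Hs at 2. apply sumN_le. intros k. simpl. lia.
Qed.

Lemma premerge_state N e i j : is_state N e -> (1 <= i)%nat -> (1 <= j)%nat -> (i + j <= N)%nat ->
  (1 <= e (i + j))%nat -> is_state N (premerge e i j) /\ Cn N (premerge e i j) = S (Cn N e).
Proof.
  intros [Hz Hs] hi hj hij he. unfold premerge. split; [split|].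
  - intros k hk. unfold add1, sub1.
    destruct (Nat.eqb_spec k j); [lia|]. destruct (Nat.eqb_spec k i); [lia|].
    destruct (Nat.eqb_spec k (i + j)); [lia|]. apply Hz; auto.
  - rewrite (W_add1 N S) by lia. rewrite (W_add1 N S) by lia.
    assert (H := W_sub1 N S e (i + j) ltac:(lia) he). lia.
  - unfold Cn. rewrite (W_add1 N (fun _ => 1%nat)) by lia. rewrite (W_add1 N (fun _ => 1%nat)) by lia.
    assert (H := W_sub1 N (fun _ => 1%nat) e (i + j) ltac:(lia) he). cbv beta in H. lia.
Qed.

Lemma prodR_first n X : prodR (S n) (fun k => if k =? 0 then X else 1) = X.
Proof. induction n. simpl. ring. change (prodR (S (S n)) (fun k => if k =? 0 then X else 1)) with
  (prodR (S n) (fun k => if k =? 0 then X else 1) * (if S n =? 0 then X else 1)). rewrite IHn. simpl. ring. Qed.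

Lemma gibbs0_init N v : (2 <= N)%nat -> gibbs N v 0 (init_state N) = 1.
Proof.
  intros hN. unfold gibbs.
  rewrite (prodR_ext N _ (fun k' => if k' =? 0 then 1 / INR (fact N) else 1)).
  replace N with (S (N - 1)) at 2 by lia. rewrite prodR_first. field. apply INR_fact_neq_0.
  intros k hk. destruct k as [|k].
  - simpl Nat.eqb. cbv iota. unfold init_state. simpl Nat.eqb. cbv iota.
    rewrite acoef1_0 by auto. rewrite pow1. auto.
  - unfold init_state. simpl Nat.eqb. cbv iota. simpl. field.
Qed.

Lemma gibbs0_other N v e : (2 <= N)%nat -> is_state N e -> e <> init_state N -> gibbs N v 0 e = 0.
Proof.
  intros hN He Hne.
  destruct (classic (exists k, (2 <= k <= N)%nat /\ (1 <= e k)%nat)) as [[k [hk1 hk2]]|Hno].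
  - assert (H := Gp_sub1 N v hN 0 e k ltac:(lia) hk2).
    rewrite acoefk_0 in H by (auto || lia). rewrite Rmult_0_l in H.
    unfold gibbs. fold (Gp N v 0 e).
    apply Rmult_integral in H. destruct H as [H|H]. rewrite H; ring.
    exfalso. apply (not_0_INR (e k)); auto. lia.
  - exfalso. apply Hne. destruct He as [Hz Hs].
    assert (Hk : forall k, (2 <= k <= N)%nat -> e k = 0%nat).
    { intros k hk. destruct (e k) eqn:E; auto. exfalso. apply Hno. exists k. split; auto. lia. }
    apply functional_extensionality. intros m. unfold init_state.
    destruct (Nat.eqb_spec m 1) as [->|ne].
    + rewrite sumN_shift' in Hs by lia. rewrite sumN_zero in Hs. lia.
      intros i hi. rewrite Hk by lia. lia.
    + destruct (Nat.le_gt_cases 2 m).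
      destruct (Nat.le_gt_cases m N). apply Hk; lia. apply Hz; lia. apply Hz; lia.
Qed.

Section Main.
Variable v : R.
Variable N : nat.
Hypothesis hv : 0 < v.
Hypothesis hN : (2 <= N)%nat.
Variable p : R -> (nat -> nat) -> R.
Hypothesis hfwd : forall eta, is_state N eta -> forall t, 0 < t ->
      derivable_pt_lim (fun s => p s eta) t
        (in_flow N v (p t) eta - p t eta * out_rate N v eta).
Hypothesis hcont : forall eta, is_state N eta -> forall eps, 0 < eps ->
      exists delta, 0 < delta /\
        forall s, 0 <= s < delta -> Rabs (p s eta - p 0 eta) < eps.
Hypothesis hinit1 : p 0 (init_state N) = 1.
Hypothesis hinit0 : forall eta, is_state N eta -> eta <> init_state N -> p 0 eta = 0.

Lemma step eta : is_state N eta ->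
  (forall i j, (1 <= i)%nat -> (1 <= j)%nat -> (i + j <= N)%nat -> (1 <= eta (i + j))%nat ->
     forall t, 0 <= t -> p t (premerge eta i j) = gibbs N v t (premerge eta i j)) ->
  forall t, 0 <= t -> p t eta = gibbs N v t eta.
Proof.
  intros He IH.
  assert (Hin : forall t, 0 <= t -> in_flow N v (p t) eta = in_flow N v (gibbs N v t) eta).
  { intros t ht. unfold in_flow. apply sumR_ext. intros i' hi'. apply sumR_ext. intros j' hj'. cbv zeta.
    destruct (Nat.leb (S i') (S j') && Nat.leb (S i' + S j')%nat N && Nat.leb 1 (eta (S i' + S j')%nat))%bool eqn:C;
      [|reflexivity].
    apply andb_prop in C. destruct C as [C C3]. apply andb_prop in C. destruct C as [C1 C2].
    apply Nat.leb_le in C2. apply Nat.leb_le in C3. rewrite IH; auto; lia. }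
  set (c := out_rate N v eta).
  assert (H := ode_unique (fun s => p s eta - gibbs N v s eta) c).
  intros t ht. apply Rminus_diag_uniq. apply H; auto.
  - intros s hs. apply (D_ext (minus_fct (fun s => p s eta) (fun s => gibbs N v s eta))). reflexivity.
    replace (- c * (p s eta - gibbs N v s eta)) with
      ((in_flow N v (p s) eta - p s eta * out_rate N v eta) -
       (in_flow N v (gibbs N v s) eta - gibbs N v s eta * out_rate N v eta)).
    apply derivable_pt_lim_minus. apply hfwd; auto. apply D_gibbs; auto.
    rewrite Hin by lra. unfold c. ring.
  - intros eps heps.
    destruct (hcont eta He (eps/2) ltac:(lra)) as [d1 [hd1 Hd1]].
    assert (Hc : continuity_pt (fun s => gibbs N v s eta) 0).
    { apply derivable_continuous_pt. eexists. apply D_gibbs; auto. }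
    unfold continuity_pt, continue_in, limit1_in, limit_in in Hc. simpl in Hc.
    destruct (Hc (eps/2) ltac:(lra)) as [d2 [hd2 Hd2]].
    exists (Rmin d1 d2). split. apply Rmin_glb_lt; auto.
    intros s hs. assert (s < d1) by (apply Rlt_le_trans with (Rmin d1 d2); [lra|apply Rmin_l]).
    assert (s < d2) by (apply Rlt_le_trans with (Rmin d1 d2); [lra|apply Rmin_r]).
    destruct (Req_dec s 0) as [->|ns].
    + replace (p 0 eta - gibbs N v 0 eta - (p 0 eta - gibbs N v 0 eta)) with 0 by ring.
      rewrite Rabs_R0. lra.
    + assert (A1 := Hd1 s ltac:(lra)).
      assert (A2 : Rabs (gibbs N v s eta - gibbs N v 0 eta) < eps / 2).
      { apply Hd2. split. split. exact I. auto. change (Rabs (s - 0) < d2). rewrite Rminus_0_r, Rabs_pos_eq; lra. }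
      replace (p s eta - gibbs N v s eta - (p 0 eta - gibbs N v 0 eta)) with
        ((p s eta - p 0 eta) - (gibbs N v s eta - gibbs N v 0 eta)) by ring.
      eapply Rle_lt_trans. apply Rabs_triang. rewrite Rabs_Ropp. lra.
  - destruct (classic (eta = init_state N)) as [->|ne].
    rewrite hinit1, gibbs0_init by auto. ring.
    rewrite hinit0, gibbs0_other by auto. ring.
Qed.

Lemma main_ind d : forall eta, is_state N eta -> (N <= Cn N eta + d)%nat ->
  forall t, 0 <= t -> p t eta = gibbs N v t eta.
Proof.
  induction d; intros eta He Hd; apply step; auto; intros i j hi hj hij he;
    destruct (premerge_state N eta i j He hi hj hij he) as [Hs HC].
  - exfalso. generalize (Cn_le N _ Hs). lia.
  - apply IHd; auto. lia.
Qed.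

End Main.

Theorem mainTheorem8 (v : R) (N : nat) (hv : 0 < v) (hN : (2 <= N)%nat)
  (p : R -> (nat -> nat) -> R)
  (hfwd : forall eta, is_state N eta -> forall t, 0 < t ->
      derivable_pt_lim (fun s => p s eta) t
        (in_flow N v (p t) eta - p t eta * out_rate N v eta))
  (hcont : forall eta, is_state N eta -> forall eps, 0 < eps ->
      exists delta, 0 < delta /\
        forall s, 0 <= s < delta -> Rabs (p s eta - p 0 eta) < eps)
  (hinit1 : p 0 (init_state N) = 1)
  (hinit0 : forall eta, is_state N eta -> eta <> init_state N -> p 0 eta = 0) :
  forall t eta, 0 <= t -> is_state N eta -> p t eta = gibbs N v t eta.
Proof.
  intros t eta ht He.
  apply (main_ind v N hN p hfwd hcont hinit1 hinit0 N eta He); auto. lia.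
Qed.
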